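(* Suppose that random variables $X',Y',X'',Y''$ satisfy (1) $(X',Y')\overset{d}{=}(X'',Y'')$; (2) $((X',Y'),(X'',Y''))\overset{d}{=}((X',Y''),(X'',Y'))$; (3) $(X',Y')$ and $(X'',Y'')$ are independent. Then $X',X'',Y',Y''$ are independent.
   Context: $\overset{d}{=}$ denotes equality in distribution. *)

(* Defs.v *)
From HB Require Import structures.
From mathcomp Require Import all_boot all_order all_algebra.
From mathcomp Require Import all_classical all_reals all_analysis.
Set Implicit Arguments. Unset Strict Implicit. Unset Printing Implicit Defensive.
Import Order.TTheory GRing.Theory Num.Theory.
Local Open Scope classical_set_scope.
Local Open Scope ring_scope.

Definition pairRV (T U V : Type) (X : T -> U) (Y : T -> V) : T -> U * V :=
  fun w => (X w, Y w).

Definition eq_in_law d (T : measurableType d) (R : realType) (P : probability T R)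
  d' (U : measurableType d') (X Y : T -> U) : Prop :=
  forall A : set U, measurable A -> P (X @^-1` A) = P (Y @^-1` A).

Definition indep2 d (T : measurableType d) (R : realType) (P : probability T R)
  d1 (U1 : measurableType d1) d2 (U2 : measurableType d2)
  (X : T -> U1) (Y : T -> U2) : Prop :=
  forall (A : set U1) (B : set U2), measurable A -> measurable B ->
    P (X @^-1` A `&` Y @^-1` B) = (P (X @^-1` A) * P (Y @^-1` B))%E.

(* Mutual independence of four random elements (product rule for all
   measurable sets; taking some sets to be the whole space gives the
   product rule for every subfamily). *)
Definition indep4 d (T : measurableType d) (R : realType) (P : probability T R)
  d1 (U1 : measurableType d1) d2 (U2 : measurableType d2)
  d3 (U3 : measurableType d3) d4 (U4 : measurableType d4)
  (X1 : T -> U1) (X2 : T -> U2) (X3 : T -> U3) (X4 : T -> U4) : Prop :=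
  forall (A1 : set U1) (A2 : set U2) (A3 : set U3) (A4 : set U4),
    measurable A1 -> measurable A2 -> measurable A3 -> measurable A4 ->
    P (X1 @^-1` A1 `&` X2 @^-1` A2 `&` X3 @^-1` A3 `&` X4 @^-1` A4) =
    (P (X1 @^-1` A1) * P (X2 @^-1` A2) * P (X3 @^-1` A3) * P (X4 @^-1` A4))%E.

(* Main.v *)
Require Import Defs.
From HB Require Import structures.
From mathcomp Require Import all_boot all_order all_algebra.
From mathcomp Require Import all_classical all_reals all_analysis.
Local Open Scope classical_set_scope.
Local Open Scope ring_scope.

Theorem mainTheorem5 (d : measure_display) (T : measurableType d) (R : realType)
  (P : probability T R)
  (dx : measure_display) (SX : measurableType dx)
  (dy : measure_display) (SY : measurableType dy)
  (X' X'' : T -> SX) (Y' Y'' : T -> SY)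
  (mX' : measurable_fun setT X') (mX'' : measurable_fun setT X'')
  (mY' : measurable_fun setT Y') (mY'' : measurable_fun setT Y'')
  (H1 : eq_in_law P (pairRV X' Y') (pairRV X'' Y''))
  (H2 : eq_in_law P (pairRV (pairRV X' Y') (pairRV X'' Y''))
                    (pairRV (pairRV X' Y'') (pairRV X'' Y')))
  (H3 : indep2 P (pairRV X' Y') (pairRV X'' Y'')) :
  indep4 P X' X'' Y' Y''.
Proof.
pose m (A : set SX) (B : set SY) := P (X' @^-1` A `&` Y' @^-1` B).
pose G (A : set SX) (B : set SY) (C : set SX) (D : set SY) :=
  P [set w | A (X' w) /\ B (Y' w) /\ C (X'' w) /\ D (Y'' w)].
have key : forall A B C D, measurable A -> measurable B -> measurable C ->
    measurable D -> G A B C D = (m A B * m C D)%E.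
  move=> A B C D mA mB mC mD.
  have := H3 _ _ (measurableX mA mB) (measurableX mC mD).
  have := H1 _ (measurableX mC mD).
  rewrite /G /m => <- <-; congr (P _).
  by apply/seteqP; split=> w /=; rewrite /pairRV /=; tauto.
have key2 : forall A B C D, measurable A -> measurable B -> measurable C ->
    measurable D -> G A B C D = (m A D * m C B)%E.
  move=> A B C D mA mB mC mD.
  rewrite -key //.
  transitivity (P (pairRV (pairRV X' Y'') (pairRV X'' Y') @^-1` ((A `*` D) `*` (C `*` B)))).
    rewrite /G; congr (P _); by apply/seteqP; split=> w /=; rewrite /pairRV /=; tauto.
  rewrite -H2; last exact: measurableX (measurableX mA mD) (measurableX mC mB).
  rewrite /G; congr (P _); by apply/seteqP; split=> w /=; rewrite /pairRV /=; tauto.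
have mTT : m setT setT = 1%E.
  rewrite /m -(probability_setT P); congr (P _).
  by apply/seteqP; split=> w /=.
have fac : forall A B, measurable A -> measurable B ->
    m A B = (m A setT * m setT B)%E.
  move=> A B mA mB.
  rewrite -key2 // key // mTT mule1 //.
move=> A1 A2 A3 A4 m1 m2 m3 m4.
have e1 : P (X' @^-1` A1) = m A1 setT.
  rewrite /m; congr (P _); by apply/seteqP; split=> w /=; tauto.
have e3 : P (Y' @^-1` A3) = m setT A3.
  rewrite /m; congr (P _); by apply/seteqP; split=> w /=; tauto.
have e2 : P (X'' @^-1` A2) = m A2 setT.
  have := H1 _ (measurableX m2 (@measurableT _ SY)).
  rewrite /m => ->; congr (P _); by apply/seteqP; split=> w /=; rewrite /pairRV /=; tauto.
have e4 : P (Y'' @^-1` A4) = m setT A4.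
  have := H1 _ (measurableX (@measurableT _ SX) m4).
  rewrite /m => ->; congr (P _); by apply/seteqP; split=> w /=; rewrite /pairRV /=; tauto.
rewrite e1 e2 e3 e4.
have -> : P (X' @^-1` A1 `&` X'' @^-1` A2 `&` Y' @^-1` A3 `&` Y'' @^-1` A4)
   = G A1 A3 A2 A4.
  rewrite /G; congr (P _); by apply/seteqP; split=> w /=; tauto.
rewrite key // (fac A1 A3) // (fac A2 A4) //.
move: (m A1 setT) (m setT A3) (m A2 setT) (m setT A4) => a b c e.
by rewrite -!muleA (muleCA b c).
Qed.
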